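(* Fix an integer $L\ge 0$. The set function $F_1:2^V\to\mathbb{R}$, $F_1(S)=nL-\sum_{u\in V\setminus S}h^L_{uS}$, satisfies $F_1(\emptyset)=0$, is nondecreasing (i.e. $F_1(S)\le F_1(T)$ whenever $S\subseteq T\subseteq V$), and is submodular (i.e. for all $S\subseteq T\subseteq V$ and $j\in V\setminus T$, $F_1(S\cup\{j\})-F_1(S)\ge F_1(T\cup\{j\})-F_1(T)$).
   Context: Let $G=(V,E)$ be a finite undirected, unweighted graph with $n=|V|$ nodes in which every node $u$ has degree $d_u\ge 1$. For $u\in V$, the random walk starting at $u$ is the Markov chain $(Z_u^t)_{t\ge 0}$ with $Z_u^0=u$ and $Z_u^{t+1}$ chosen uniformly at random among the neighbors of $Z_u^t$. For $S\subseteq V$ and $u\in V$, define $T^L_{uS}=\min\{\min\{t\ge 0: Z_u^t\in S\},\,L\}$ (with $\min\emptyset=\infty$), and $h^L_{uS}=\mathbb{E}[T^L_{uS}]$. *)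

(* Defs.v *)
From HB Require Import structures.
From mathcomp Require Import all_boot all_order all_algebra.
Set Implicit Arguments. Unset Strict Implicit. Unset Printing Implicit Defensive.
Import Order.TTheory GRing.Theory Num.Theory.
Local Open Scope ring_scope.

Section RW.
Variables (R : realFieldType) (V : finType) (e : rel V).

Definition deg (x : V) : nat := #|[set y | e x y]|.

Definition trans (x y : V) : R := if e x y then (deg x)%:R^-1 else 0.

(* probability that the walk from u has Z^1..Z^L equal to p *)
Definition walk_prob (L : nat) (u : V) (p : L.-tuple V) : R :=
  \prod_(i < L) trans (nth u (u :: p) i) (nth u (u :: p) i.+1).

(* T^L_{uS} as a function of the trajectory (Z^0,...,Z^L) = u :: p :
   min (first t with Z^t in S) L ; find returns size (= L+1) if none *)
Definition trunc_hit (L : nat) (S : {set V}) (u : V) (p : seq V) : nat :=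
  minn (find (fun x => x \in S) (u :: p)) L.

(* h^L_{uS} = E[T^L_{uS}], the expectation over the law of (Z^1,...,Z^L) *)
Definition hL (L : nat) (S : {set V}) (u : V) : R :=
  \sum_(p : (L.-tuple V)%type) @walk_prob L u p * (trunc_hit L S u p)%:R.

Definition F1 (L : nat) (S : {set V}) : R :=
  (#|V| * L)%:R - \sum_(u in ~: S) hL L S u.

End RW.

(* Main.v *)
Require Import Defs.
From HB Require Import structures.
From mathcomp Require Import all_boot all_order all_algebra.
From mathcomp Require Import zify ring lra.
Import Order.TTheory GRing.Theory Num.Theory.
Local Open Scope ring_scope.

Section Aux.
Variables (R : realFieldType) (V : finType) (e : rel V).
Hypothesis deg_pos : forall u : V, (0 < deg e u)%N.

Lemma trans_ge0 x y : 0 <= trans R e x y.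
Proof. by rewrite /trans; case: (e x y) => //; rewrite invr_ge0 ler0n. Qed.

Lemma walk_ge0 L u p : 0 <= walk_prob R e (L:=L) u p.
Proof. by apply: prodr_ge0 => i _; apply: trans_ge0. Qed.

Lemma sum_trans u : \sum_y trans R e u y = 1.
Proof.
rewrite /trans -big_mkcond /= sumr_const.
have -> : #|[pred y | e u y]| = deg e u by rewrite /deg cardsE.
rewrite -[_ *+ _]mulr_natr mulVf // pnatr_eq0 -lt0n; exact: deg_pos.
Qed.

Lemma walk_cons L u x (t : L.-tuple V) :
  walk_prob R e (L:=L.+1) u [tuple of x :: t] = trans R e u x * walk_prob R e x t.
Proof.
rewrite /walk_prob big_ord_recl /=; congr (_ * _).
apply: eq_bigr => i _ /=; rewrite add0n.
rewrite [nth u t i](set_nth_default x); last by rewrite size_tuple.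
by rewrite [nth u (x :: t) i](set_nth_default x) //= size_tuple ltnS ltnW.
Qed.

Lemma sum_walk L u : \sum_(p : L.-tuple V) walk_prob R e (L:=L) u p = 1.
Proof.
elim: L u => [|L IH] u.
  rewrite (big_pred1 [tuple]) ?/walk_prob ?big_ord0 // => p.
  by apply/esym/eqP/val_inj; rewrite /= (size0nil (size_tuple p)).
rewrite (reindex (fun q : V * L.-tuple V => [tuple of q.1 :: q.2])) /=; last first.
  apply: onW_bij; exists (fun t : L.+1.-tuple V => (thead t, behead_tuple t)).
    by case=> x t /=; rewrite theadE; congr pair; apply: val_inj.
  by move=> t; rewrite [t]tuple_eta /= theadE; apply: val_inj.
rewrite -(pair_big xpredT xpredT (fun x (t : L.-tuple V) =>
   walk_prob R e (L:=L.+1) u [tuple of x :: t])) /=.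
rewrite -(sum_trans u); apply: eq_bigr => x _.
by under eq_bigr => t _ do rewrite walk_cons; rewrite -mulr_sumr IH mulr1.
Qed.
End Aux.

Section Main.
Variables (R : realFieldType) (V : finType) (e : rel V) (L : nat).

Definition G (S : {set V}) : R :=
  \sum_u \sum_(p : L.-tuple V) walk_prob R e (L:=L) u p * (trunc_hit L S u p)%:R.

Lemma F1E S : F1 R e L S = (#|V| * L)%:R - G S.
Proof.
rewrite /F1 /G; congr (_ - _).
rewrite [RHS](bigID (fun u => u \in S)) /=.
rewrite [X in _ = X + _]big1 ?add0r.
  by apply: eq_big => [u|u _] //; rewrite in_setC.
move=> u uS; apply: big1 => p _.
by rewrite /trunc_hit /= uS min0n mulr0.
Qed.

Lemma find_mono (S T : {set V}) s : S \subset T ->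
  (find (fun x => x \in T) s <= find (fun x => x \in S) s)%N.
Proof.
move=> sub; elim: s => //= x s IH.
case xT: (x \in T) => //; case xS: (x \in S) => //.
by move/subsetP: sub => /(_ x xS); rewrite xT.
Qed.

Lemma find_U1 (S : {set V}) j s :
  find (fun x => x \in j |: S) s = minn (find (fun x => x \in S) s) (find (pred1 j) s).
Proof.
elim: s => //= x s IH; rewrite in_setU1.
case: (x == j) => /=; case: (x \in S) => //=; rewrite ?min0n ?minn0 //.
by rewrite IH minnSS.
Qed.
End Main.

Theorem theorem4 (R : realFieldType) (V : finType) (e : rel V)
  (e_sym : symmetric e) (e_irr : irreflexive e)
  (deg_pos : forall u : V, (0 < deg e u)%N) (L : nat) :
  F1 R e L set0 = 0 /\
  (forall S T : {set V}, S \subset T -> F1 R e L S <= F1 R e L T) /\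
  (forall (S T : {set V}) (j : V), S \subset T -> j \notin T ->
     F1 R e L (j |: S) - F1 R e L S >= F1 R e L (j |: T) - F1 R e L T).
Proof.
split; [|split].
- rewrite F1E /G.
  have -> : \sum_u \sum_(p : L.-tuple V) walk_prob R e (L:=L) u p * (trunc_hit L set0 u p)%:R
          = \sum_(u : V) (L%:R : R).
    apply: eq_bigr => u _.
    have th : forall p : L.-tuple V, trunc_hit L set0 u p = L.
      move=> p; rewrite /trunc_hit hasNfind /= ?size_tuple; first lia.
      by rewrite in_set0 /=; apply/hasPn => x _; rewrite in_set0.
    under eq_bigr => p _ do rewrite th.
    by rewrite -mulr_suml sum_walk // mul1r.
  rewrite natrM mulr_natl; apply/eqP; rewrite subr_eq0; apply/eqP.
  by rewrite sumr_const; congr (_ *+ _); apply: eq_card.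
- move=> S T sub; rewrite !F1E.
  suff H : G R V e L T <= G R V e L S by lra.
  rewrite /G.
  apply: ler_sum => u _; apply: ler_sum => p _.
  apply: ler_wpM2l; first exact: walk_ge0.
  rewrite ler_nat /trunc_hit.
  have := @find_mono V S T (u :: p) sub; lia.
- move=> S T j sub jT.
  rewrite !F1E.
  suff H : G R V e L T - G R V e L (j |: T) <= G R V e L S - G R V e L (j |: S) by lra.
  rewrite /G -!sumrB; apply: ler_sum => u _; rewrite -!sumrB; apply: ler_sum => p _.
  rewrite -!mulrBr; apply: ler_wpM2l; first exact: walk_ge0.
  rewrite /trunc_hit !find_U1.
  have := @find_mono V S T (u :: p) sub.
  set a := find _ (u :: p); set b := find _ (u :: p); set c := find _ (u :: p).
  move=> hab.
  have : (minn a L + minn (minn b c) L <= minn b L + minn (minn a c) L)%N by lia.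
  rewrite -(ler_nat R) !natrD; lra.
Qed.
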